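(* Let $A, C, D$ be binary random variables, with $A$ taking values $a,\overline{a}$, $C$ taking values $c,\overline{c}$, $D$ taking values $d,\overline{d}$, and let $Y$ be a real random variable with finite expectation. Suppose the joint distribution factorizes as \[ p(A,C,D,Y)=p(D)\,p(C\mid D)\,p(A\mid C)\,p(Y\mid A,C) \] (i.e. $D$ causes $C$, $C$ is a common cause of $A$ and $Y$, and $A$ causes $Y$). Assume that $C$ and $D$ are dependent, and that every event $\{A=x, C=y, D=z\}$ has positive probability. If $E[Y\mid A,D]$ is monotone in $D$, then $E[Y\mid A,C]$ is monotone in $C$.
   Context: $E[Y\mid A,D]$ is called nondecreasing in $D$ if $E[Y\mid a,d]\ge E[Y\mid a,\overline{d}]$ and $E[Y\mid \overline{a},d]\ge E[Y\mid \overline{a},\overline{d}]$; nonincreasing in $D$ if both inequalities are reversed; monotone in $D$ if it is nondecreasing or nonincreasing. The same definitions apply with $C$ in place of $D$. *)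

(* Defs.v *)
From mathcomp Require Import all_boot all_algebra.
From mathcomp Require Import all_classical all_reals all_analysis.
Set Implicit Arguments. Unset Strict Implicit. Unset Printing Implicit Defensive.
Import GRing.Theory Num.Theory.
Local Open Scope classical_set_scope.
Local Open Scope ring_scope.

Section Defs.
Context (d : measure_display) (T : measurableType d) (R : realType)
        (P : probability T R).

Definition ev (X : T -> bool) (b : bool) : set T := [set w | X w = b].

Definition pr (S : set T) : R := fine (P S).

Definition cprob (S U : set T) : R := pr (S `&` U) / pr U.

Definition condE (Y : T -> R) (U : set T) : R :=
  fine (\int[P]_(w in U) (Y w)%:E) / pr U.

(* E[Y | A, D] is nondecreasing in D (true = a, d ; false = abar, dbar) *)
Definition nondecr_in (Y : T -> R) (A D : T -> bool) : Prop :=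
  condE Y (ev A true `&` ev D true) >= condE Y (ev A true `&` ev D false) /\
  condE Y (ev A false `&` ev D true) >= condE Y (ev A false `&` ev D false).

Definition nonincr_in (Y : T -> R) (A D : T -> bool) : Prop :=
  condE Y (ev A true `&` ev D true) <= condE Y (ev A true `&` ev D false) /\
  condE Y (ev A false `&` ev D true) <= condE Y (ev A false `&` ev D false).

Definition monotone_in (Y : T -> R) (A D : T -> bool) : Prop :=
  nondecr_in Y A D \/ nonincr_in Y A D.

End Defs.

(* Main.v *)
Require Import Defs.
From mathcomp Require Import all_boot all_algebra.
From mathcomp Require Import all_classical all_reals all_analysis.
From mathcomp Require Import measurable_realfun.
From mathcomp Require Import ring lra.
Import GRing.Theory Num.Theory.
Local Open Scope classical_set_scope.
Local Open Scope ring_scope.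

Section Helpers.
Context d (T : measurableType d) (R : realType) (P : probability T R).

Lemma prE {S : set T} : measurable S -> P S = (pr P S)%:E.
Proof. by move=> mS; rewrite /pr fineK // fin_num_measure. Qed.

Lemma pr_ge0 (S : set T) : 0 <= pr P S.
Proof. by rewrite /pr; apply: fine_ge0; exact: measure_ge0. Qed.

Lemma pr_le (S1 S2 : set T) : measurable S1 -> measurable S2 -> S1 `<=` S2 ->
  pr P S1 <= pr P S2.
Proof.
move=> m1 m2 s12; rewrite -lee_fin -(prE m1) -(prE m2).
by apply: le_measure => //; rewrite inE.
Qed.

Lemma prU (S1 S2 : set T) : measurable S1 -> measurable S2 ->
  S1 `&` S2 = set0 -> pr P (S1 `|` S2) = pr P S1 + pr P S2.
Proof.
move=> m1 m2 d12; have mU := measurableU _ _ m1 m2.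
apply: EFin_inj; rewrite EFinD -(prE mU) -(prE m1) -(prE m2).
exact: measureU.
Qed.

Lemma splitU (U : set T) (X : T -> bool) :
  U = (U `&` ev X true) `|` (U `&` ev X false).
Proof.
apply/seteqP; split => w /=.
  by move=> Uw; rewrite /ev /=; case: (X w); [left|right].
by case => -[].
Qed.

Lemma splitD (U V : set T) (X : T -> bool) :
  (U `&` ev X true) `&` (V `&` ev X false) = set0.
Proof.
apply/seteqP; split => w //=; rewrite /ev /=.
by move=> [[_ h1] [_ h2]]; rewrite h1 in h2.
Qed.

Local Open Scope ereal_scope.

Lemma restr_int {S : set T} (mS : measurable S) (h : T -> \bar R) :
  measurable_fun setT h -> (forall x, 0 <= h x) ->
  \int[P]_(x in S) h x = \int[mrestr P mS]_(x in setT) h x.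
Proof.
move=> mh h0.
rewrite (@ge0_negligible_integral _ _ _ (mrestr P mS) setT (~` S)) //; last 2 first.
- exact: measurableC.
- by change (P (~` S `&` S) = 0); rewrite setICl measure0.
rewrite setTD setCK.
apply: eq_measure_integral => A mA AS.
by change (P A = P (A `&` S)); rewrite setIidl.
Qed.

Lemma key {Y : T -> R} (mY : measurable_fun setT Y)
  {S1 S2 : set T} (mS1 : measurable S1) (mS2 : measurable S2) {k : {nonneg R}}
  {g : R -> \bar R} (mg : measurable_fun setT g) (g0 : forall r, 0 <= g r)
  (H : forall B, measurable B -> P (S1 `&` Y @^-1` B) = k%:num%:E * P (S2 `&` Y @^-1` B)) :
  \int[P]_(x in S1) g (Y x) = k%:num%:E * \int[P]_(x in S2) g (Y x).
Proof.
have mgY : measurable_fun setT (g \o Y) by exact: measurableT_comp.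
rewrite (restr_int mS1) // (restr_int mS2) //.
have := ge0_integral_pushforward mY (mrestr P mS1) measurableT mg (fun y _ => g0 y).
rewrite preimage_setT => <-.
have := ge0_integral_pushforward mY (mrestr P mS2) measurableT mg (fun y _ => g0 y).
rewrite preimage_setT => <-.
rewrite -ge0_integral_mscale //.
apply: eq_measure_integral => A mA _.
change (P (Y @^-1` A `&` S1) = k%:num%:E * P (Y @^-1` A `&` S2)).
by rewrite !(setIC (Y @^-1` A)) H.
Unshelve. all: exact mY.
Qed.

Lemma keyR (Y : T -> R) (mY : measurable_fun setT Y)
  (iY : P.-integrable setT (EFin \o Y))
  (S1 S2 : set T) (mS1 : measurable S1) (mS2 : measurable S2) (k : R) (k0 : (0 <= k)%R)
  (H : forall B, measurable B -> pr P (S1 `&` Y @^-1` B) = (k * pr P (S2 `&` Y @^-1` B))%R) :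
  fine (\int[P]_(x in S1) (Y x)%:E) = (k * fine (\int[P]_(x in S2) (Y x)%:E))%R.
Proof.
have mYB B : measurable B -> measurable (Y @^-1` B).
  by move=> mB; rewrite -[X in measurable X]setTI; exact: mY.
have H' B : measurable B -> P (S1 `&` Y @^-1` B) = (NngNum k0)%:num%:E * P (S2 `&` Y @^-1` B).
  move=> mB; rewrite (prE (measurableI _ _ mS1 (mYB _ mB))) (prE (measurableI _ _ mS2 (mYB _ mB))).
  by rewrite H //= EFinM.
have mE : measurable_fun setT (@EFin R) by exact: EFin_measurable.
have cp S : \int[P]_(x in S) EFin^\+ (Y x) = \int[P]_(x in S) (EFin \o Y)^\+ x.
  by apply: eq_integral => x _; rewrite !funeposE.
have cn S : \int[P]_(x in S) EFin^\- (Y x) = \int[P]_(x in S) (EFin \o Y)^\- x.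
  by apply: eq_integral => x _; rewrite !funenegE.
have Kp : \int[P]_(x in S1) (EFin \o Y)^\+ x = k%:E * \int[P]_(x in S2) (EFin \o Y)^\+ x.
  rewrite -!cp; exact: (key mY mS1 mS2 (measurable_funepos mE) (fun r => funepos_ge0 _ r) H').
have Kn : \int[P]_(x in S1) (EFin \o Y)^\- x = k%:E * \int[P]_(x in S2) (EFin \o Y)^\- x.
  rewrite -!cn; exact: (key mY mS1 mS2 (measurable_funeneg mE) (fun r => funeneg_ge0 _ r) H').
have i2 : P.-integrable S2 (EFin \o Y) := integrableS measurableT mS2 (subsetT _) iY.
have fp : \int[P]_(x in S2) (EFin \o Y)^\+ x \is a fin_num by exact: integrable_pos_fin_num.
have fn : \int[P]_(x in S2) (EFin \o Y)^\- x \is a fin_num by exact: integrable_neg_fin_num.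
have e1 : \int[P]_(x in S1) (Y x)%:E =
   k%:E * \int[P]_(x in S2) (EFin \o Y)^\+ x - k%:E * \int[P]_(x in S2) (EFin \o Y)^\- x.
  rewrite -Kp -Kn; exact: integralE.
have e2 : \int[P]_(x in S2) (Y x)%:E =
   \int[P]_(x in S2) (EFin \o Y)^\+ x - \int[P]_(x in S2) (EFin \o Y)^\- x.
  exact: integralE.
rewrite e1 e2 -(fineK fp) -(fineK fn) -!EFinM -!EFinB /=.
by rewrite mulrBr.
Qed.

End Helpers.

Lemma alg_id (R : realFieldType) (ctt ctf cft cff a b et ef : R) :
  0 < ctt -> 0 < ctf -> 0 < cft -> 0 < cff -> 0 < a -> 0 < b ->
  (ctt*a*et + cft*b*ef)/(ctt*a + cft*b) - (ctf*a*et + cff*b*ef)/(ctf*a + cff*b)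
  = (et - ef) * (a*b*(ctt*cff - ctf*cft) / ((ctt*a + cft*b)*(ctf*a + cff*b))).
Proof.
move=> htt htf hft hff ha hb.
have n1 : ctt*a + cft*b != 0 by apply: lt0r_neq0; rewrite addr_gt0 // mulr_gt0.
have n2 : ctf*a + cff*b != 0 by apply: lt0r_neq0; rewrite addr_gt0 // mulr_gt0.
by field; rewrite n1 n2.
Qed.

Lemma W_sign {R : realFieldType} {ctt ctf cft cff a b : R} :
  0 < ctt -> 0 < ctf -> 0 < cft -> 0 < cff -> 0 < a -> 0 < b ->
  let W := a*b*(ctt*cff - ctf*cft) / ((ctt*a + cft*b)*(ctf*a + cff*b)) in
  (0 < ctt*cff - ctf*cft -> 0 < W) /\ (ctt*cff - ctf*cft < 0 -> W < 0).
Proof.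
move=> htt htf hft hff ha hb W.
have den : 0 < (ctt*a + cft*b)*(ctf*a + cff*b).
  by rewrite mulr_gt0 // addr_gt0 // mulr_gt0.
split => hM.
  by rewrite /W divr_gt0 // !mulr_gt0.
have : 0 < a*b*(- (ctt*cff - ctf*cft)) / ((ctt*a + cft*b)*(ctf*a + cff*b)).
  by rewrite divr_gt0 // !mulr_gt0 // oppr_gt0.
by rewrite mulrN mulNr oppr_gt0.
Qed.

Lemma final_sign {R : realFieldType} {D1 D2 u1 u2 W1 W2 M : R} :
  D1 = u1 * W1 -> D2 = u2 * W2 ->
  (0 < M -> 0 < W1) -> (0 < M -> 0 < W2) ->
  (M < 0 -> W1 < 0) -> (M < 0 -> W2 < 0) -> M != 0 ->
  ((0 <= D1 /\ 0 <= D2) \/ (D1 <= 0 /\ D2 <= 0)) ->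
  ((0 <= u1 /\ 0 <= u2) \/ (u1 <= 0 /\ u2 <= 0)).
Proof.
move=> -> -> p1 p2 n1 n2 M0.
rewrite real_neqr_lt ?num_real // in M0; case/orP: M0 => hM.
- have w1 := n1 hM; have w2 := n2 hM.
  case=> -[h1 h2]; [right|left]; split; nra.
- have w1 := p1 hM; have w2 := p2 hM.
  case=> -[h1 h2]; [left|right]; split; nra.
Qed.

Lemma dep_alg {R : realFieldType} {ctt ctf cft cff : R} : 1 = ctt + ctf + (cft + cff) -> ctt * cff - ctf * cft = 0 ->
  ctt = (ctt + ctf) * (ctt + cft) /\ ctf = (ctt + ctf) * (ctf + cff) /\
  cft = (cft + cff) * (ctt + cft) /\ cff = (cft + cff) * (ctf + cff).
Proof. move=> h1 hM. split; [|split; [|split]]; nra. Qed.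

Theorem theorem6 (d : measure_display) (T : measurableType d) (R : realType)
  (P : probability T R) (A C D : T -> bool) (Y : T -> R)
  (mA : forall b, measurable (ev A b))
  (mC : forall b, measurable (ev C b))
  (mD : forall b, measurable (ev D b))
  (mY : measurable_fun setT Y)
  (iY : P.-integrable setT (EFin \o Y))
  (* factorization p(A,C,D,Y) = p(D) p(C|D) p(A|C) p(Y|A,C) *)
  (fact : forall (x y z : bool) (B : set R), measurable B ->
     pr P (ev A x `&` ev C y `&` ev D z `&` Y @^-1` B) =
       pr P (ev D z) * cprob P (ev C y) (ev D z) * cprob P (ev A x) (ev C y)
       * cprob P (Y @^-1` B) (ev A x `&` ev C y))
  (* C and D are dependent *)
  (dep : ~ (forall y z : bool,
      pr P (ev C y `&` ev D z) = pr P (ev C y) * pr P (ev D z)))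
  (* positivity *)
  (pos : forall x y z : bool, (0 < P (ev A x `&` ev C y `&` ev D z))%E) :
  monotone_in P Y A D -> monotone_in P Y A C.
Proof.
move=> hmon.
have prE' S : measurable S -> P S = (pr P S)%:E := @prE d T R P S.
have prle S1 S2 : measurable S1 -> measurable S2 -> S1 `<=` S2 -> pr P S1 <= pr P S2 :=
  @pr_le d T R P S1 S2.
have prU' S1 S2 : measurable S1 -> measurable S2 -> S1 `&` S2 = set0 ->
  pr P (S1 `|` S2) = pr P S1 + pr P S2 := @prU d T R P S1 S2.
have pr0 S : 0 <= pr P S := @pr_ge0 d T R P S.
have m2 x y : measurable (ev A x `&` ev C y) := measurableI _ _ (mA x) (mC y).
have m3 x y z : measurable (ev A x `&` ev C y `&` ev D z) := measurableI _ _ (m2 x y) (mD z).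
have mCD y z : measurable (ev C y `&` ev D z) := measurableI _ _ (mC y) (mD z).
have mAD x z : measurable (ev A x `&` ev D z) := measurableI _ _ (mA x) (mD z).
have p3 x y z : 0 < pr P (ev A x `&` ev C y `&` ev D z).
  by rewrite -lte_fin -(prE' _ (m3 x y z)).
have p2 x y : 0 < pr P (ev A x `&` ev C y).
  have := p3 x y true; have : pr P (ev A x `&` ev C y `&` ev D true) <= pr P (ev A x `&` ev C y).
    by apply: prle => //; exact: subIsetl.
  lra.
have pCD y z : 0 < pr P (ev C y `&` ev D z).
  have := p3 true y z; have : pr P (ev A true `&` ev C y `&` ev D z) <= pr P (ev C y `&` ev D z).
    by apply: prle => //; move=> w [[_ h1] h2]; split.
  lra.
have pC y : 0 < pr P (ev C y).
  have := pCD y true; have : pr P (ev C y `&` ev D true) <= pr P (ev C y).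
    by apply: prle => //; exact: subIsetl.
  lra.
have pD z : 0 < pr P (ev D z).
  have := pCD true z; have : pr P (ev C true `&` ev D z) <= pr P (ev D z).
    by apply: prle => //; exact: subIsetr.
  lra.
have pal x y : 0 < cprob P (ev A x) (ev C y) by rewrite /cprob divr_gt0.
have c1 x y : cprob P setT (ev A x `&` ev C y) = 1.
  by rewrite /cprob setTI divff // (lt0r_neq0 (p2 x y)).
have hq x y z : pr P (ev A x `&` ev C y `&` ev D z) =
    pr P (ev C y `&` ev D z) * cprob P (ev A x) (ev C y).
  have := fact x y z setT measurableT.
  rewrite preimage_setT setIT c1 mulr1 => ->.
  by rewrite {1}/cprob [pr P (ev D z) * _]mulrC divfK // (lt0r_neq0 (pD z)).
have hY x y z B : measurable B ->
    pr P (ev A x `&` ev C y `&` ev D z `&` Y @^-1` B) =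
    pr P (ev A x `&` ev C y `&` ev D z) / pr P (ev A x `&` ev C y) *
    pr P (ev A x `&` ev C y `&` Y @^-1` B).
  move=> mB; have h2 := fact x y z setT measurableT.
  rewrite preimage_setT setIT c1 mulr1 in h2.
  rewrite (fact x y z B mB) -h2 /cprob (setIC (Y @^-1` B)).
  by rewrite mulrA mulrAC.
have hJ x y z : fine (\int[P]_(w in ev A x `&` ev C y `&` ev D z) (Y w)%:E) =
    pr P (ev A x `&` ev C y `&` ev D z) / pr P (ev A x `&` ev C y) *
    fine (\int[P]_(w in ev A x `&` ev C y) (Y w)%:E).
  apply: (@keyR d T R P Y mY iY _ _ (m3 x y z) (m2 x y)).
    by rewrite divr_ge0.
  exact: hY.
have hce x y z : fine (\int[P]_(w in ev A x `&` ev C y `&` ev D z) (Y w)%:E) =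
    pr P (ev C y `&` ev D z) * cprob P (ev A x) (ev C y) * condE P Y (ev A x `&` ev C y).
  by rewrite hJ /condE -hq mulrAC mulrA.
have hsplitA x z : ev A x `&` ev D z =
    (ev A x `&` ev C true `&` ev D z) `|` (ev A x `&` ev C false `&` ev D z).
  by rewrite {1}(@splitU d T (ev A x `&` ev D z) C) !(setIAC _ (ev D z)).
have hdisA x z : (ev A x `&` ev C true `&` ev D z) `&` (ev A x `&` ev C false `&` ev D z) = set0.
  apply/seteqP; split => w //=; rewrite /ev /=.
  by move=> [[[_ h1] _] [[_ h2] _]]; rewrite h1 in h2.
have mYE : measurable_fun setT (EFin \o Y) by apply/measurable_EFinP.
have fin S : measurable S -> (\int[P]_(w in S) (Y w)%:E)%E \is a fin_num.
  move=> mS; apply: integrable_fin_num => //.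
  exact: (integrableS measurableT mS (subsetT _) iY).
have hJA x z : fine (\int[P]_(w in ev A x `&` ev D z) (Y w)%:E) =
    fine (\int[P]_(w in ev A x `&` ev C true `&` ev D z) (Y w)%:E) +
    fine (\int[P]_(w in ev A x `&` ev C false `&` ev D z) (Y w)%:E).
  rewrite hsplitA integral_setU //; last 2 first.
  - exact: measurable_funTS mYE.
  - exact/disj_set2P/hdisA.
  by rewrite fineD // fin.
have hprA x z : pr P (ev A x `&` ev D z) =
    pr P (ev A x `&` ev C true `&` ev D z) + pr P (ev A x `&` ev C false `&` ev D z).
  by rewrite hsplitA prU'.
have hcD x z : condE P Y (ev A x `&` ev D z) =
    fine (\int[P]_(w in ev A x `&` ev D z) (Y w)%:E) / pr P (ev A x `&` ev D z) := erefl.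
have hc x z : condE P Y (ev A x `&` ev D z) =
   (pr P (ev C true `&` ev D z) * cprob P (ev A x) (ev C true) * condE P Y (ev A x `&` ev C true)
    + pr P (ev C false `&` ev D z) * cprob P (ev A x) (ev C false) * condE P Y (ev A x `&` ev C false))
   / (pr P (ev C true `&` ev D z) * cprob P (ev A x) (ev C true)
      + pr P (ev C false `&` ev D z) * cprob P (ev A x) (ev C false)).
  by rewrite hcD hJA hprA !hce !hq.
have hFy y : pr P (ev C y) = pr P (ev C y `&` ev D true) + pr P (ev C y `&` ev D false).
  by rewrite {1}(@splitU d T (ev C y) D) prU' // splitD.
have hGz z : pr P (ev D z) = pr P (ev C true `&` ev D z) + pr P (ev C false `&` ev D z).
  have eDz : ev D z = (ev C true `&` ev D z) `|` (ev C false `&` ev D z).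
    by rewrite {1}(@splitU d T (ev D z) C) !(setIC (ev D z)).
  by rewrite {1}eDz prU' // !(setIC _ (ev D z)) splitD.
have h1 : 1 = pr P (ev C true) + pr P (ev C false).
  have -> : 1 = pr P setT by rewrite /pr probability_setT.
  by rewrite (@splitU d T setT C) prU' // ?splitD // !setTI.
set ctt := pr P (ev C true `&` ev D true).
set ctf := pr P (ev C true `&` ev D false).
set cft := pr P (ev C false `&` ev D true).
set cff := pr P (ev C false `&` ev D false).
have M0 : ctt * cff - ctf * cft != 0.
  apply/negP => /eqP hM; apply: dep => yy zz.
  have h1' : 1 = ctt + ctf + (cft + cff) by rewrite h1 !hFy.
  have [e1 [e2 [e3 e4]]] := dep_alg h1' hM.
  rewrite hFy hGz.
  by case: yy; case: zz; rewrite -/ctt -/ctf -/cft -/cff.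

have key_x x : condE P Y (ev A x `&` ev D true) - condE P Y (ev A x `&` ev D false) =
   (condE P Y (ev A x `&` ev C true) - condE P Y (ev A x `&` ev C false)) *
   (cprob P (ev A x) (ev C true) * cprob P (ev A x) (ev C false) * (ctt * cff - ctf * cft) /
     ((ctt * cprob P (ev A x) (ev C true) + cft * cprob P (ev A x) (ev C false)) *
      (ctf * cprob P (ev A x) (ev C true) + cff * cprob P (ev A x) (ev C false)))).
  by rewrite !hc; apply: alg_id.
have Ws x := W_sign (pCD true true) (pCD true false) (pCD false true) (pCD false false)
  (pal x true) (pal x false).
have Wt := Ws true; have Wf := Ws false.
rewrite /= in Wt Wf.
have := final_sign (key_x true) (key_x false) Wt.1 Wf.1 Wt.2 Wf.2 M0.
rewrite /monotone_in /nondecr_in /nonincr_in in hmon *.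
move=> H.
have [[u1 u2]|[u1 u2]] := H (ltac:(case: hmon => -[h3 h4]; [left|right]; split; lra)).
- by left; split; lra.
- by right; split; lra.
Qed.
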